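(* Let $l=\sum_{i=4}^8 m_ie_i$ with $m_i\in\mathbb Z$ and $\sum_{i=4}^8m_i$ even (these are exactly the vectors of $E_8$ orthogonal to $L_3=\langle e_2+e_1,e_3-e_2,e_2-e_1\rangle_\mathbb Z\cong A_3$). Then $l$ is orthogonal to exactly $12$ roots of $E_8$ if and only if (i) $m_j\ne0$ for every $j$; (ii) $m_i\ne\pm m_j$ for all $4\le i<j\le 8$; (iii) $\sum_{i=4}^8\pm m_i\ne0$ for every choice of signs. Moreover, $l$ is orthogonal to exactly $14$ roots of $E_8$ if (i) and (iii) hold and there is exactly one pair $4\le i<j\le8$ with $m_i=\pm m_j$.
   Context: $e_1,\dots,e_8$ is an orthonormal basis of $\mathbb R^8$ and $E_8=\{x\in\mathbb Z^8\cup(\mathbb Z+\tfrac12)^8\mid \sum_i x_i\in2\mathbb Z\}$; its roots (vectors of square $2$) are the $112$ vectors $\pm e_i\pm e_j$ ($i<j$) and the $128$ vectors $\frac12\sum_{i=1}^8(-1)^{\nu_i}e_i$ with $\sum\nu_i$ even. *)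

(* Defs.v *)
From mathcomp Require Import all_boot all_order all_algebra.
Set Implicit Arguments. Unset Strict Implicit. Unset Printing Implicit Defensive.
Import Order.TTheory GRing.Theory Num.Theory.
Local Open Scope ring_scope.

(* Vectors of R^8 with rational coordinates (all vectors of interest, E8 and its
   roots, have rational coordinates); coordinate i : 'I_8 is e_{i+1}. *)
Definition vec8 := 'I_8 -> rat.

Definition dot8 (x y : vec8) : rat := \sum_(i < 8) x i * y i.

Definition inE8 (x : vec8) : bool :=
  ([forall i, x i \is a Num.int] || [forall i, x i - 1/2 \is a Num.int])
  && ((\sum_(i < 8) x i) / 2 \is a Num.int).

Definition isE8root (x : vec8) : bool := inE8 x && (dot8 x x == 2).

(* Every root has coordinates in {-1,-1/2,0,1/2,1}; we enumerate such vectors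
   through codes c : 'I_8 -> 'I_5 (coordinate c_i/2 - 1). This encoding is
   injective, so counting codes = counting roots. *)
Definition code_vec (c : {ffun 'I_8 -> 'I_5}) : vec8 :=
  fun i => (c i)%:R / 2 - 1.

Definition n_orth_roots (l : vec8) : nat :=
  #|[set c : {ffun 'I_8 -> 'I_5} |
      isE8root (code_vec c) && (dot8 (code_vec c) l == 0)]|.

(* l = sum_{i=4}^8 m_i e_i, with m indexed by 'I_5 (m j is m_{j+4}) *)
Definition lvec (m : 'I_5 -> int) : vec8 :=
  fun i => if (3 <= i)%N then (m (inord (i - 3)))%:~R else 0.

Definition cond_i (m : 'I_5 -> int) : Prop := forall j, m j != 0.
Definition cond_ii (m : 'I_5 -> int) : Prop :=
  forall i j : 'I_5, (i < j)%N -> m i != m j /\ m i != - m j.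
Definition cond_iii (m : 'I_5 -> int) : Prop :=
  forall s : 'I_5 -> bool, \sum_(i < 5) (if s i then - m i else m i) != 0.
Definition exactly_one_pair (m : 'I_5 -> int) : Prop :=
  #|[set p : 'I_5 * 'I_5 | (p.1 < p.2)%N && ((m p.1 == m p.2) || (m p.1 == - m p.2))]| = 1%N.

(* Main.v *)
Require Import Defs.
From mathcomp Require Import all_boot all_order all_algebra.
From mathcomp Require Import ring zify.
Import Order.TTheory GRing.Theory Num.Theory.
Local Open Scope ring_scope.

Lemma intr_natE (d : nat) : (d%:Z)%:~R = d%:R :> rat.
Proof. by []. Qed.

Lemma int_div_nat (y : int) (d : nat) : (0 < d)%N ->
  ((y%:~R / d%:R : rat) \is a Num.int) = (d%:Z %| y)%Z.
Proof.
move=> d0; have dn0 : (d%:R : rat) != 0 by rewrite pnatr_eq0 -lt0n.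
apply/Num.Theory.intrP/idP.
- case=> n hn; have : y%:~R = (n * d%:Z)%:~R :> rat.
    by rewrite intrM intr_natE -hn divfK.
  by move/intr_inj => ->; apply: dvdz_mull; apply: dvdzz.
- case/dvdzP=> k ->; exists k.
  by rewrite intrM intr_natE mulfK.
Qed.

Definition vals (c : {ffun 'I_8 -> 'I_5}) : seq nat :=
  [seq nat_of_ord (c (inord k)) | k <- iota 0 8].

Lemma vals_lt c x : x \in vals c -> (x < 5)%N.
Proof. by case/mapP=> k _ ->. Qed.

Lemma size_vals c : size (vals c) = 8%N.
Proof. by rewrite size_map size_iota. Qed.

Lemma forall_vals (f : nat -> bool) (c : {ffun 'I_8 -> 'I_5}) : [forall i, f (c i)] = all f (vals c).
Proof.
apply/forallP/allP.
- by move=> H x /mapP [k _ ->].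
- move=> H i; apply: H; apply/mapP; exists (val i).
    by rewrite mem_iota /=.
  by rewrite inord_val.
Qed.

Lemma sum_vals (R : nmodType) (F : nat -> R) (c : {ffun 'I_8 -> 'I_5}) :
  \sum_(i < 8) F (c i) = \sum_(x <- vals c) F x.
Proof.
rewrite big_map (eq_bigr (fun i : 'I_8 => F (c (inord i)))); last first.
  by move=> i _; rewrite inord_val.
by rewrite -(big_mkord xpredT (fun k => F (c (inord k)))).
Qed.

Definition sqd (x : nat) := (((x - 2) + (2 - x)) ^ 2)%N.
Definition root_l (l : seq nat) : bool :=
  (all (fun x => ~~ odd x) l || all odd l) && (4 %| sumn l)%N && (sumn (map sqd l) == 8)%N.

Lemma codeE c i : code_vec c i = ((c i)%:Z - 2)%:~R / 2.
Proof. rewrite /code_vec intrB intr_natE; field; done. Qed.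

Lemma sum_half (l : seq nat) :
  \sum_(x <- l) ((x%:R / 2 - 1) : rat) = (sumn l)%:R / 2 - (size l)%:R.
Proof.
elim: l => [|x l IH]; first by rewrite big_nil /=; field; done.
rewrite big_cons IH /= natrD -addn1 natrD; field; done.
Qed.

Lemma root_iff c : isE8root (code_vec c) = root_l (vals c).
Proof.
rewrite /isE8root /inE8 /root_l.
have -> : [forall i, code_vec c i \is a Num.int] = all (fun x => ~~ odd x) (vals c).
  rewrite -forall_vals; apply: eq_forallb => i.
  rewrite codeE (int_div_nat _ 2) //.
  by case: (c i) => [[|[|[|[|[|?]]]]] ?].
have -> : [forall i, code_vec c i - 1/2 \is a Num.int] = all odd (vals c).
  rewrite -forall_vals; apply: eq_forallb => i.
  have -> : code_vec c i - 1/2 = ((c i)%:Z - 3)%:~R / 2%:R.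
    by rewrite /code_vec intrB intr_natE; field; done.
  rewrite (int_div_nat _ 2) //.
  by case: (c i) => [[|[|[|[|[|?]]]]] ?].
have -> : (\sum_(i < 8) code_vec c i) / 2 \is a Num.int = (4 %| sumn (vals c))%N.
  rewrite (@sum_vals _ (fun x => x%:R / 2 - 1)) sum_half size_vals.
  have -> : ((sumn (vals c))%:R / 2 - 8%:R) / 2 = ((sumn (vals c))%:Z - 16)%:~R / 4%:R :> rat.
    by rewrite intrB intr_natE; field; done.
  by rewrite (int_div_nat _ 4) // rpredBr.
congr (_ && _).
rewrite /dot8 (@sum_vals _ (fun x => (x%:R / 2 - 1) * (x%:R / 2 - 1))).
rewrite (eq_big_seq (fun x => (sqd x)%:R / 4)); last first.
  move=> x /vals_lt; case: x => [|[|[|[|[|?]]]]] // _; rewrite /sqd /=; field; done.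
rewrite -mulr_suml -natr_sum sumnE big_map.
move: (\sum_(x <- _) _)%N => N.
apply/eqP/eqP => [h|->].
  have : N%:R = 8%:R :> rat by rewrite -[LHS](@divfK _ 4) // h.
  by move/eqP; rewrite eqr_nat => /eqP.
by field; done.
Qed.

Definition psi (m : 'I_5 -> int) (u : seq nat) : bool :=
  (\sum_(j < 5) ((nth 0 u j)%:Z - 2) * m j == 0).

Lemma dot_iff (c : {ffun 'I_8 -> 'I_5}) m :
  (dot8 (code_vec c) (lvec m) == 0) = psi m (drop 3 (vals c)).
Proof.
have L0 : forall i : 'I_8, (i < 3)%N -> lvec m i = 0.
  by move=> i hi; rewrite /lvec leqNgt hi.
rewrite /dot8; do 3 rewrite big_ord_recl.
rewrite !L0 // !mulr0 !add0r.
have -> : \sum_(i < 5) code_vec c (lift ord0 (lift ord0 (lift ord0 i))) *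
      lvec m (lift ord0 (lift ord0 (lift ord0 i))) =
    \sum_(j < 5) (((nth 0 (drop 3 (vals c)) j)%:Z - 2) * m j)%:~R / 2.
  apply: eq_bigr => j _.
  have hj : (3 + j < 8)%N by have := ltn_ord j; lia.
  have -> : lift ord0 (lift ord0 (lift ord0 j)) = inord (3 + j) :> 'I_8.
    by apply: val_inj; rewrite /= inordK // addnC.
  rewrite /lvec inordK // leq_addr addKn inord_val codeE nth_drop.
  rewrite (nth_map 0) ?size_iota // nth_iota // add0n.
  by rewrite intrM mulrAC.
rewrite -mulr_suml -rmorph_sum /= mulf_eq0 intr_eq0 invr_eq0 orbF.
by [].
Qed.

Fixpoint allL (vs : seq nat) (n : nat) : seq (seq nat) :=
  if n is n'.+1 then flatten [seq [seq x :: l | l <- allL vs n'] | x <- vs] else [:: [::]].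

Lemma mem_allL vs n l : (l \in allL vs n) = (size l == n) && all (mem vs) l.
Proof.
elim: n l => [|n IH] [|x l] //=.
  by apply/negbTE/flatten_mapP => -[y _ /mapP [l' _]].
apply/flatten_mapP/idP.
- by case=> y yv /mapP [l' hl' [-> ->]]; move: hl'; rewrite IH eqSS => /andP[-> ->]; rewrite yv.
- rewrite eqSS => /and3P [hs hx ha]; exists x => //; apply/mapP; exists l => //.
  by rewrite IH hs.
Qed.

Lemma uniq_allL vs n : uniq vs -> uniq (allL vs n).
Proof.
move=> uv; elim: n => [|n IH] //=.
apply: (allpairs_uniq (f := fun x l => x :: l)) => //.
by move=> [x1 l1] [x2 l2] _ _ /= [-> ->].
Qed.

Lemma vals_inj : injective vals.
Proof.
move=> c1 c2 h; apply/ffunP => i; apply: val_inj.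
have := congr1 (fun s => nth 0 s i) h.
by rewrite /vals !(nth_map 0) ?size_iota // nth_iota // add0n inord_val.
Qed.

Lemma mem_vals l : (l \in map vals (enum {ffun 'I_8 -> 'I_5})) = (l \in allL (iota 0 5) 8).
Proof.
rewrite mem_allL; apply/mapP/idP.
- case=> c _ ->; rewrite size_vals eqxx andTb; apply/allP => x /vals_lt.
  by move=> h; change (x \in iota 0 5); rewrite mem_iota.
- case/andP => /eqP hs /allP ha.
  exists [ffun i : 'I_8 => (inord (nth 0 l i) : 'I_5)]; first by rewrite mem_enum.
  apply: (@eq_from_nth _ 0); first by rewrite size_vals hs.
  move=> k; rewrite hs => hk.
  rewrite /vals (nth_map 0) ?size_iota // nth_iota // add0n ffunE inordK // inordK //.
  have : nth 0 l k \in iota 0 5 by apply: ha; rewrite mem_nth // hs.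
  by rewrite mem_iota.
Qed.

Definition Gp m (l : seq nat) := root_l l && psi m (drop 3 l).

Lemma count_main m : n_orth_roots (lvec m) = count (Gp m) (allL (iota 0 5) 8).
Proof.
rewrite /n_orth_roots cardE /enum_mem size_filter -enumT.
rewrite (eq_count (a2 := fun c => Gp m (vals c))); last first.
  by move=> c /=; rewrite inE root_iff dot_iff.
rewrite -(count_map vals (Gp m)).
apply/permP; apply: uniq_perm.
- rewrite map_inj_uniq ?enum_uniq //; exact: vals_inj.
- exact: uniq_allL.
- exact: mem_vals.
Qed.

Definition Lroots := [seq drop 3 l | l <- allL (iota 0 5) 8 & root_l l].
Definition z5 := nseq 5 2%N.
Definition ej x j := set_nth 0%N z5 j x.
Definition pv a b x y := set_nth 0%N (set_nth 0%N z5 a x) b y.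
Definition LE := flatten [seq nseq 6 (ej 4%N j) ++ nseq 6 (ej 0%N j) | j <- iota 0 5].
Definition Qp a b := if (a < b)%N then [:: pv a b 4 0; pv a b 0 4; pv a b 4 4; pv a b 0 0]%N else [::].
Definition LP := flatten (flatten [seq [seq Qp a b | b <- iota 0 5] | a <- iota 0 5]).
Definition LS := flatten [seq nseq 4 u | u <- allL [:: 1; 3]%N 5].
Definition Lstruct := nseq 12 z5 ++ LE ++ LP ++ LS.

Lemma Lperm : perm_eq (map (drop 3) (filter root_l (allL (iota 0 5) 8))) Lstruct.
Proof. vm_compute. reflexivity. Qed.

Lemma nth_z5 (k : 'I_5) : nth 0%N z5 k = 2%N.
Proof. by rewrite nth_nseq ltn_ord. Qed.

Lemma psi_z5 m : psi m z5.
Proof. by rewrite /psi big1 // => k _; rewrite nth_z5 subrr mul0r. Qed.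

Lemma count_struct_gen m s : perm_eq (map (drop 3) (filter root_l s)) Lstruct ->
  count (Gp m) s =
  (12 + count (psi m) LE + count (psi m) LP + count (psi m) LS)%N.
Proof.
move=> hp.
rewrite (eq_count (a2 := predI (fun l => psi m (drop 3 l)) root_l)); last first.
  by move=> l; rewrite /Gp /= andbC.
rewrite -count_filter -(count_map (drop 3) (psi m)) (permP hp).
rewrite /Lstruct (count_cat _ (nseq 12 z5)) (count_cat _ LE) (count_cat _ LP).
rewrite (count_nseq _ 12 z5) psi_z5.
move: (count _ LE) (count _ LP) (count _ LS) => a b c.
by rewrite mul1n !addnA.
Qed.

Lemma count_struct m : count (Gp m) (allL (iota 0 5) 8) =
  (12 + count (psi m) LE + count (psi m) LP + count (psi m) LS)%N.
Proof. exact: (count_struct_gen m _ Lperm). Qed.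

Lemma psi_ej m x j : (j < 5)%N -> psi m (ej x j) = ((x%:Z - 2) * m (inord j) == 0).
Proof.
move=> hj; rewrite /psi (bigD1 (inord j)) //= big1 ?addr0.
  by rewrite /ej nth_set_nth /= inordK // eqxx.
move=> k hk; have hkj : (k : nat) != j.
  by apply: contra hk => /eqP <-; rewrite inord_val.
by rewrite /ej nth_set_nth /= (negbTE hkj) nth_z5 subrr mul0r.
Qed.

Lemma psi_pv m a b x y : (a < b)%N -> (b < 5)%N ->
  psi m (pv a b x y) = ((x%:Z - 2) * m (inord a) + (y%:Z - 2) * m (inord b) == 0).
Proof.
move=> hab hb; have ha : (a < 5)%N by apply: ltn_trans hb.
have hne : (inord a : 'I_5) != inord b.
  by apply/eqP => /(congr1 val); rewrite /= !inordK //; move/eqP; rewrite ltn_eqF.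
rewrite /psi (bigD1 (inord b)) //= (bigD1 (inord a)) //= big1 ?addr0.
  rewrite /pv !inordK // !nth_set_nth /= (ltn_eqF hab) !eqxx.
  by rewrite nth_set_nth /= eqxx addrC.
move=> k /andP [hkb hka].
have hkb' : (k : nat) != b by apply: contra hkb => /eqP <-; rewrite inord_val.
have hka' : (k : nat) != a by apply: contra hka => /eqP <-; rewrite inord_val.
by rewrite /pv nth_set_nth /= (negbTE hkb') nth_set_nth /= (negbTE hka') nth_z5 subrr mul0r.
Qed.

Lemma has_flatten T (p : pred T) ss : has p (flatten ss) = has (has p) ss.
Proof. by elim: ss => //= s ss IH; rewrite has_cat IH. Qed.

Lemma has_iota5 (P : nat -> bool) : has P (iota 0 5) = [exists j : 'I_5, P j].
Proof.
apply/hasP/existsP.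
- by case=> k; rewrite mem_iota add0n => hk hP; exists (Ordinal hk).
- by case=> j hj; exists (val j) => //; rewrite mem_iota /=.
Qed.

Lemma hasLE m : has (psi m) LE = [exists j : 'I_5, m j == 0].
Proof.
rewrite /LE has_flatten has_map has_iota5; apply: eq_existsb => j /=.
rewrite !psi_ej // inord_val !mulf_eq0.
by case: (m j == 0).
Qed.

Lemma psi_sign m u : size u = 5%N -> all (mem [:: 1; 3]%N) u ->
  psi m u = (\sum_(j < 5) (if nth 0%N u j == 1%N then - m j else m j) == 0).
Proof.
move=> hs /allP ha; rewrite /psi; congr (_ == 0); apply: eq_bigr => j _.
have : nth 0%N u j \in [:: 1; 3]%N by apply: ha; rewrite mem_nth // hs.
by rewrite !inE => /orP [] /eqP ->; rewrite /= ?mulN1r ?mul1r.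
Qed.

Lemma hasLS m : ~~ has (psi m) LS <-> cond_iii m.
Proof.
rewrite /LS has_flatten has_map.
rewrite (eq_has (a2 := psi m)); last first.
  by move=> u /=; case: (psi m u).
split.
- move=> /hasPn H s.
  pose u := [seq (if s (inord k) then 1 else 3)%N | k <- iota 0 5].
  have hu : u \in allL [:: 1; 3]%N 5.
    rewrite mem_allL size_map size_iota eqxx andTb; apply/allP => x /mapP [k _ ->].
    by case: (s _).
  have := H u hu; rewrite psi_sign; last 2 first.
  - by rewrite size_map size_iota.
  - by move: hu; rewrite mem_allL => /andP [].
  rewrite (eq_bigr (fun j => if s j then - m j else m j)) //.
  move=> j _; rewrite (nth_map 0%N) ?size_iota // nth_iota // add0n inord_val.
  by case: (s j).
- move=> H; apply/hasPn => u; rewrite mem_allL => /andP [/eqP hs ha].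
  rewrite psi_sign //; exact: (H (fun j => nth 0%N u j == 1%N)).
Qed.

Lemma count_sum T (p : pred T) s : count p s = (\sum_(x <- s) (p x : nat))%N.
Proof. by elim: s => [|x s IH]; rewrite ?big_nil ?big_cons //= IH. Qed.

Lemma L1 (x y : int) : ((4%:Z - 2) * x + (0%:Z - 2) * y == 0) = (x == y).
Proof. by apply/eqP/eqP; lia. Qed.
Lemma L2 (x y : int) : ((0%:Z - 2) * x + (4%:Z - 2) * y == 0) = (x == y).
Proof. by apply/eqP/eqP; lia. Qed.
Lemma L3 (x y : int) : ((4%:Z - 2) * x + (4%:Z - 2) * y == 0) = (x == - y).
Proof. by apply/eqP/eqP; lia. Qed.
Lemma L4 (x y : int) : ((0%:Z - 2) * x + (0%:Z - 2) * y == 0) = (x == - y).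
Proof. by apply/eqP/eqP; lia. Qed.

Lemma countLP m : count (psi m) LP = (\sum_(a < 5) \sum_(b < 5)
   (if (a < b)%N then 2 * (m a == m b) + 2 * (m a == - m b) else 0))%N.
Proof.
rewrite count_sum /LP !big_flatten big_map.
change (iota 0 5) with (index_iota 0 5); rewrite big_mkord; apply: eq_bigr => a _.
rewrite big_map big_mkord; apply: eq_bigr => b _.
rewrite /Qp; case: ifP => hab; last by rewrite big_nil.
rewrite !big_cons big_nil !psi_pv // !inord_val L1 L2 L3 L4.
by case: (_ == _); case: (_ == _).
Qed.

Lemma count_eq0 T (p : pred T) s : (count p s == 0)%N = ~~ has p s.
Proof. by rewrite has_count lt0n negbK. Qed.

Lemma condE m : (count (psi m) LE == 0)%N <-> cond_i m.
Proof.
rewrite count_eq0 hasLE negb_exists; split.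
- by move/forallP.
- by move=> H; apply/forallP.
Qed.

Lemma condP m : (count (psi m) LP == 0)%N <-> cond_ii m.
Proof.
rewrite countLP sum_nat_eq0; split.
- move=> H i j hij; have := forallP H i; rewrite sum_nat_eq0 => /forallP /(_ j).
  rewrite hij; by case: (m i == m j); case: (m i == - m j).
- move=> H; apply/forallP => a; rewrite sum_nat_eq0; apply/forallP => b.
  case: ifP => hab //; have [h1 h2] := H a b hab.
  by rewrite (negbTE h1) (negbTE h2).
Qed.

Lemma condS m : (count (psi m) LS == 0)%N <-> cond_iii m.
Proof. by rewrite count_eq0; exact: hasLS. Qed.

Lemma cardP m : cond_i m ->
  count (psi m) LP = (2 * #|[set p : 'I_5 * 'I_5 | (p.1 < p.2)%N &&
      ((m p.1 == m p.2) || (m p.1 == - m p.2))]|)%N.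
Proof.
move=> Hi; rewrite countLP.
have -> : #|[set p : 'I_5 * 'I_5 | (p.1 < p.2)%N &&
      ((m p.1 == m p.2) || (m p.1 == - m p.2))]| =
   (\sum_(a < 5) \sum_(b < 5) ((a < b)%N && ((m a == m b) || (m a == - m b)) : nat))%N.
  rewrite pair_bigA -sum1_card big_mkcond; apply: eq_bigr => p _.
  by rewrite inE; case: ifP.
rewrite big_distrr; apply: eq_bigr => a _; rewrite big_distrr; apply: eq_bigr => b _.
case: ifP => hab //=.
have := Hi a; case E1: (m a == m b); case E2: (m a == - m b) => //=.
move=> H; move/eqP: E1 => E1; move/eqP: E2 => E2; have Hb : m b = 0 by lia.
by rewrite E1 Hb eqxx in H.
Qed.

Theorem proposition7p9 (m : 'I_5 -> int) (heven : (2 %| \sum_(i < 5) m i)%Z) :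
  (n_orth_roots (lvec m) = 12%N <-> cond_i m /\ cond_ii m /\ cond_iii m) /\
  (cond_i m -> cond_iii m -> exactly_one_pair m -> n_orth_roots (lvec m) = 14%N).
Proof.
rewrite count_main count_struct; split.
- split.
  + move=> h.
    have e1 : (count (psi m) LE == 0)%N by apply/eqP; lia.
    have e2 : (count (psi m) LP == 0)%N by apply/eqP; lia.
    have e3 : (count (psi m) LS == 0)%N by apply/eqP; lia.
    by split; [apply/condE | split; [apply/condP | apply/condS]].
  + case=> h1 [h2 h3].
    move/condE/eqP: h1 => ->; move/condP/eqP: h2 => ->; move/condS/eqP: h3 => ->.
    by [].
- move=> h1 h3 h4.
  rewrite (@cardP m h1); move: h4; rewrite /exactly_one_pair => ->.
  by move/condE/eqP: h1 => ->; move/condS/eqP: h3 => ->.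
Qed.
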